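(* Let $\boldsymbol{A}\in\mathsf{PSL}$ be finite and $\Phi$ a Sahlqvist quasiequation in the language $\{\land,\lnot,0,1\}$ of $\mathsf{PSL}$. If $\boldsymbol{A}$ validates $\Phi$, then $\boldsymbol{A}^+$ validates $\Phi$.
   Context: $\mathsf{PSL}$: algebras $\langle A;\land,\lnot,0,1\rangle$, $\langle A;\land\rangle$ a semilattice (order $a\le b$ iff $a\land b=a$) with minimum $0$, maximum $1$, and $c\land a=0\iff c\le\lnot a$. Join irreducible element: not the minimum, and whenever $a=b\lor c$ with the join existing, $a=b$ or $a=c$; $\mathsf{J}(\boldsymbol{A})$ is the poset of join irreducibles. For finite $\boldsymbol{A}$, $\boldsymbol{A}^+=\langle\mathsf{Dw}(\mathsf{J}(\boldsymbol{A}));\cap,\lnot,\emptyset,\mathsf{J}(\boldsymbol{A})\rangle$ with $\mathsf{Dw}$ the downsets and $\lnot D=\{a\in\mathsf{J}(\boldsymbol{A}):D\cap{\downarrow}a=\emptyset\}$. Sahlqvist quasiequations: formulas over variables with $\land,\lor,\to,\lnot,0,1$; an occurrence of a variable is positive (negative) if the number of negations and antecedents of implications in whose scope it lies is even (odd); a formula is positive (negative) if all its variable occurrences are. A Sahlqvist antecedent is built from variables, negative formulas, $0,1$ using only $\land,\lor$. A Sahlqvist implication is a positive formula, or $\lnot\varphi$ with $\varphi$ a Sahlqvist antecedent, or $\varphi\to\psi$ with $\varphi$ a Sahlqvist antecedent and $\psi$ positive. A Sahlqvist quasiequation is $\varphi_1\land y\le z\,\&\cdots\&\,\varphi_n\land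 y\le z\Longrightarrow y\le z$ (universally quantified), $y,z$ distinct variables not in the $\varphi_i$, each $\varphi_i$ built from Sahlqvist implications using only $\land,\lor$, and $a\le b$ meaning $a\land b\approx a$. It is in the language of $\mathsf{PSL}$ if only $\land,\lnot,0,1$ occur. *)

(* Defs.v *)
From HB Require Import structures.
From Stdlib Require List.
From mathcomp Require Import all_boot.

Set Implicit Arguments.
Unset Strict Implicit.
Unset Printing Implicit Defensive.

Record alg := Alg {
  car :> Type;
  ameet : car -> car -> car;
  aneg : car -> car;
  abot : car;
  atop : car }.

Definition is_PSL (A : alg) : Prop :=
  (forall a b c : A, ameet a (ameet b c) = ameet (ameet a b) c) /\
  (forall a b : A, ameet a b = ameet b a) /\
  (forall a : A, ameet a a = a) /\
  (forall a : A, ameet (abot A) a = abot A) /\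
  (forall a : A, ameet a (atop A) = a) /\
  (forall a c : A, ameet c a = abot A <-> ameet c (aneg a) = c).

Section Plus.
Variables (T : finType) (m : T -> T -> T) (n : T -> T) (z o : T).

Definition leA (a b : T) : bool := m a b == a.

Definition is_joinb (b c a : T) : bool :=
  [&& leA b a, leA c a & [forall d, leA b d ==> leA c d ==> leA a d]].

Definition join_irr (a : T) : bool :=
  (a != z) && [forall b, forall c, is_joinb b c a ==> (a == b) || (a == c)].

Definition JA : {set T} := [set a | join_irr a].

Definition downJ (D : {set T}) : bool :=
  (D \subset JA) &&
  [forall a, forall b, [&& a \in D, b \in JA & leA b a] ==> (b \in D)].

Definition dnJ (a : T) : {set T} := [set b in JA | leA b a].

Definition negJ (D : {set T}) : {set T} := [set a in JA | [disjoint D & dnJ a]].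

Lemma downJI D1 D2 : downJ D1 -> downJ D2 -> downJ (D1 :&: D2).
Proof.
move=> /andP[s1 /forallP f1] /andP[s2 /forallP f2]; apply/andP; split.
  exact: subset_trans (subsetIl _ _) s1.
apply/forallP=> a; apply/forallP=> b; apply/implyP.
rewrite inE => /and3P[/andP[a1 a2] bJ ba]; rewrite inE.
move: (forallP (f1 a) b) (forallP (f2 a) b).
by rewrite a1 a2 bJ ba /= => -> ->.
Qed.

Lemma downJ0 : downJ set0.
Proof.
apply/andP; split; first exact: sub0set.
by apply/forallP=> a; apply/forallP=> b; rewrite inE.
Qed.

Lemma downJT : downJ JA.
Proof.
apply/andP; split; first exact: subxx.
by apply/forallP=> a; apply/forallP=> b; apply/implyP=> /and3P[].
Qed.

Lemma downJN (trans : forall a b c, leA a b -> leA b c -> leA a c) D :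
  downJ (negJ D).
Proof.
apply/andP; split.
  by apply/subsetP=> a; rewrite inE => /andP[].
apply/forallP=> a; apply/forallP=> b; apply/implyP.
rewrite inE => /and3P[/andP[aJ dis] bJ ba]; rewrite inE bJ /=.
apply: disjointWr dis; apply/subsetP=> c; rewrite !inE => /andP[-> cb] /=.
exact: trans cb ba.
Qed.

Definition PC := {D : {set T} | downJ D}.

Definition plus_of (trans : forall a b c, leA a b -> leA b c -> leA a c) : alg :=
  @Alg PC
    (fun X Y => exist _ (sval X :&: sval Y) (downJI (svalP X) (svalP Y)))
    (fun X => exist _ (negJ (sval X)) (downJN trans (sval X)))
    (exist _ set0 downJ0)
    (exist _ JA downJT).

End Plus.

Lemma PSL_le_trans (T : finType) m n z o :
  is_PSL (@Alg T m n z o) -> forall a b c, leA m a b -> leA m b c -> leA m a c.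
Proof.
case=> assoc _ a b c /eqP ab /eqP bc; apply/eqP.
have /= e := assoc a b c.
by rewrite -{1}ab -e bc ab.
Qed.

Definition plus_alg (T : finType) m n z o (HA : is_PSL (@Alg T m n z o)) : alg :=
  @plus_of T m z (PSL_le_trans HA).

Inductive fm :=
| FVar of nat
| FAnd of fm & fm
| FOr of fm & fm
| FImp of fm & fm
| FNeg of fm
| F0
| F1.

(* polar true f: every variable occurrence in f is positive;
   polar false f: every variable occurrence in f is negative
   (parity of negations and implication antecedents in scope). *)
Fixpoint polar (p : bool) (f : fm) : bool :=
  match f with
  | FVar _ => p
  | FAnd a b | FOr a b => polar p a && polar p b
  | FImp a b => polar (~~ p) a && polar p b
  | FNeg a => polar (~~ p) a
  | F0 | F1 => true
  end.
Definition positive := polar true.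
Definition negative := polar false.

Fixpoint sahl_ant (f : fm) : bool :=
  negative f ||
  match f with
  | FVar _ | F0 | F1 => true
  | FAnd a b | FOr a b => sahl_ant a && sahl_ant b
  | _ => false
  end.

Definition sahl_impl (f : fm) : bool :=
  positive f ||
  match f with
  | FNeg a => sahl_ant a
  | FImp a b => sahl_ant a && positive b
  | _ => false
  end.

Fixpoint sahl_body (f : fm) : bool :=
  sahl_impl f ||
  match f with
  | FAnd a b | FOr a b => sahl_body a && sahl_body b
  | _ => false
  end.

Fixpoint occurs (x : nat) (f : fm) : bool :=
  match f with
  | FVar y => x == y
  | FAnd a b | FOr a b | FImp a b => occurs x a || occurs x b
  | FNeg a => occurs x a
  | F0 | F1 => false
  end.

Fixpoint psl_lang (f : fm) : bool :=
  match f with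
  | FVar _ | F0 | F1 => true
  | FAnd a b => psl_lang a && psl_lang b
  | FNeg a => psl_lang a
  | FOr _ _ | FImp _ _ => false
  end.

(* the quasiequation  phi_1 /\ y <= z & ... & phi_n /\ y <= z ==> y <= z *)
Record sqe := SQE { qe_ants : seq fm; qe_y : nat; qe_z : nat }.

Definition is_sahlqvist_qe (Q : sqe) : bool :=
  (qe_y Q != qe_z Q) &&
  all (fun f => [&& sahl_body f, ~~ occurs (qe_y Q) f & ~~ occurs (qe_z Q) f])
      (qe_ants Q).

Definition qe_in_psl_lang (Q : sqe) : bool := all psl_lang (qe_ants Q).

(* evaluation in the signature <meet, neg, 0, 1>; \/ and -> are not part
   of that signature and are only evaluated (to 0) as a dummy: they never
   occur in quasiequations in the language of PSL. *)
Fixpoint eval (A : alg) (v : nat -> A) (f : fm) : A :=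
  match f with
  | FVar x => v x
  | FAnd a b => ameet (eval v a) (eval v b)
  | FNeg a => aneg (eval v a)
  | F0 => abot A
  | F1 => atop A
  | FOr _ _ | FImp _ _ => abot A
  end.

Definition holds_le (A : alg) (v : nat -> A) (a b : fm) : Prop :=
  eval v (FAnd a b) = eval v a.

Definition validates (A : alg) (Q : sqe) : Prop :=
  forall v : nat -> A,
    (forall f, List.In f (qe_ants Q) -> holds_le v (FAnd f (FVar (qe_y Q))) (FVar (qe_z Q))) ->
    holds_le v (FVar (qe_y Q)) (FVar (qe_z Q)).

(* Main.v *)
Require Import Defs.
From mathcomp Require Import all_boot.
Set Implicit Arguments.
Unset Strict Implicit.
Unset Printing Implicit Defensive.

Lemma disjP (T : finType) (A B : {set T}) : reflect (forall x, x \in A -> x \in B -> False) [disjoint A & B].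
Proof.
rewrite disjoints_subset; apply: (iffP subsetP) => h x.
  by move=> /h; rewrite inE => /negP.
by move=> xA; rewrite inE; apply/negP; apply: h.
Qed.

Lemma eval_ext (A : alg) (v1 v2 : nat -> A) f :
  (forall x, occurs x f -> v1 x = v2 x) -> eval v1 f = eval v2 f.
Proof.
elim: f => //= [x|a IHa b IHb|a IHa] h.
- by apply: h; rewrite eqxx.
- by rewrite IHa ?IHb // => x hx; apply: h; rewrite hx ?orbT.
- by rewrite IHa.
Qed.

Lemma allIn (X : Type) (p : pred X) s x : all p s -> List.In x s -> p x.
Proof. by elim: s => //= a s IH /andP[pa ps] [<-|/IH]; [|apply]. Qed.
Lemma hasIn (X : Type) (p : pred X) s : has p s -> exists x, List.In x s /\ p x.
Proof.
elim: s => //= a s IH /orP[pa|/IH [x [h1 h2]]]; first by exists a; split; [left|].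
by exists x; split; [right|].
Qed.
Lemma hasNIn (X : Type) (p : pred X) s x : ~~ has p s -> List.In x s -> ~~ p x.
Proof.
elim: s => //= a s IH; rewrite negb_or => /andP[pa ps] [<-|/(IH ps)] //.
Qed.

Section S.
Variables (T : finType) (m : T -> T -> T) (n : T -> T) (z o : T).
Hypothesis HA : is_PSL (@Alg T m n z o).

Let assoc : forall a b c, m a (m b c) = m (m a b) c. Proof. by case: HA. Qed.
Let comm : forall a b, m a b = m b a. Proof. by case: HA => _ []. Qed.
Let idem : forall a, m a a = a. Proof. by case: HA => _ [] _ []. Qed.
Let botl : forall a, m z a = z. Proof. by case: HA => _ [] _ [] _ []. Qed.
Let topr : forall a, m a o = a. Proof. by case: HA => _ [] _ [] _ [] _ []. Qed.
Let pc : forall a c, m c a = z <-> m c (n a) = c. Proof. by case: HA => _ [] _ [] _ [] _ []. Qed.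

Local Notation le := (leA m).

Lemma le_refl a : le a a. Proof. by rewrite /leA idem. Qed.
Lemma le_trans a b c : le a b -> le b c -> le a c.
Proof. exact: (PSL_le_trans HA). Qed.
Lemma le_anti a b : le a b -> le b a -> a = b.
Proof. by move=> /eqP ab /eqP ba; rewrite -ab comm ba. Qed.
Lemma le_ml a b : le (m a b) a.
Proof. by rewrite /leA -assoc (comm b a) assoc idem. Qed.
Lemma le_mr a b : le (m a b) b.
Proof. by rewrite /leA -assoc idem. Qed.
Lemma le_meet x a b : le x a -> le x b -> le x (m a b).
Proof. by move=> /eqP xa /eqP xb; rewrite /leA assoc xa xb. Qed.
Lemma le_meetE x a b : le x (m a b) = le x a && le x b.
Proof.
apply/idP/andP => [h|[h1 h2]]; last exact: le_meet.
by split; apply: le_trans h _; [apply: le_ml | apply: le_mr].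
Qed.
Lemma le_top a : le a o. Proof. by rewrite /leA topr. Qed.
Lemma le_bot a : le z a. Proof. by rewrite /leA botl. Qed.
Lemma le_botE a : le a z -> a = z.
Proof. by move=> h; apply: le_anti h (le_bot a). Qed.
Lemma meet_bot a : m a z = z. Proof. by rewrite comm botl. Qed.

Definition lmeet (l : seq T) := foldr m o l.
Lemma lmeet_le l u : u \in l -> le (lmeet l) u.
Proof.
elim: l => //= a l IH; rewrite inE => /orP[/eqP->|h]; first exact: le_ml.
exact: le_trans (le_mr _ _) (IH h).
Qed.
Lemma le_lmeet l x : (forall u, u \in l -> le x u) -> le x (lmeet l).
Proof.
elim: l => [|a l IH] h /=; first exact: le_top.
apply: le_meet; first by apply: h; rewrite inE eqxx.
by apply: IH => u hu; apply: h; rewrite inE hu orbT.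
Qed.

Definition BJ (s : seq T) := lmeet [seq u <- enum T | all (fun x => le x u) s].
Lemma BJ_ub s x : x \in s -> le x (BJ s).
Proof.
move=> xs; apply: le_lmeet => u; rewrite mem_filter => /andP[/allP h _].
exact: h.
Qed.
Lemma BJ_lub s u : (forall x, x \in s -> le x u) -> le (BJ s) u.
Proof.
move=> h; apply: lmeet_le; rewrite mem_filter mem_enum andbT.
by apply/allP.
Qed.
Lemma BJ_cons x s : is_joinb m x (BJ s) (BJ (x :: s)).
Proof.
apply/and3P; split.
- by apply: BJ_ub; rewrite inE eqxx.
- by apply: BJ_lub => y ys; apply: BJ_ub; rewrite inE ys orbT.
apply/forallP => d; apply/implyP => xd; apply/implyP => sd.
apply: BJ_lub => y; rewrite inE => /orP[/eqP->//|ys].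
exact: le_trans (BJ_ub ys) sd.
Qed.
Lemma BJ_ne j s : join_irr m z j -> j \notin s -> BJ s != j.
Proof.
move=> /andP[jz /forallP jirr]; elim: s => [|x s IH] /=.
  move=> _; apply/eqP => e.
  have : le (BJ [::]) z by apply: BJ_lub.
  by rewrite e => /le_botE; apply/eqP.
rewrite inE negb_or => /andP[jx js]; apply/eqP => e.
have := forallP (jirr x) (BJ s); rewrite -{1}e BJ_cons /= => /orP[/eqP h|/eqP h].
  by rewrite h eqxx in jx.
by move: (IH js); rewrite -h eqxx.
Qed.

Lemma lt_card b a : le b a -> b != a -> #|[set x | le x b]| < #|[set x | le x a]|.
Proof.
move=> ba nba; apply: proper_card; apply/properP; split.
  by apply/subsetP => x; rewrite !inE => h; apply: le_trans h ba.
exists a; rewrite !inE ?le_refl //; apply/negP => h.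
by rewrite (le_anti ba h) eqxx in nba.
Qed.

Lemma exJ a : a != z -> exists2 k, k \in JA m z & le k a.
Proof.
move: {2}#|[set b | le b a]| (leqnn #|[set b | le b a]|) => N.
elim: N a => [|N IH] a hN az.
  have : 0 < #|[set b | le b a]| by apply/card_gt0P; exists a; rewrite inE le_refl.
  by rewrite leqn0 in hN; rewrite (eqP hN).
case ja: (join_irr m z a); first by exists a; rewrite ?inE ?le_refl.
move: ja; rewrite /join_irr az /= => /negbT; rewrite negb_forall => /existsP[b].
rewrite negb_forall => /existsP[c]; rewrite negb_imply negb_or => /andP[jb /andP[ab ac]].
move: (jb) => /and3P[ba ca /forallP lub].
have step : forall d, le d a -> d != a -> d != z -> exists2 k, k \in JA m z & le k a.
  move=> d da ad dz.
  have [k kJ kd] := IH d (leq_trans (lt_card da ad) hN) dz.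
  by exists k => //; apply: le_trans kd da.
have [bz|bz] := eqVneq b z; last by apply: step bz; rewrite // eq_sym.
have [cz|cz] := eqVneq c z; last by apply: step cz; rewrite // eq_sym.
have := lub z; rewrite bz cz le_refl /= => /le_botE e.
by rewrite e eqxx in az.
Qed.


Local Notation J := (JA m z).
Local Notation dn := (dnJ m z).
Local Notation neg := (negJ m z).
Local Notation down := (downJ m z).

Lemma downS D a : down D -> a \in D -> a \in J.
Proof. by case/andP => /subsetP h _ /h. Qed.
Lemma downP D a b : down D -> a \in D -> b \in J -> le b a -> b \in D.
Proof.
case/andP => _ /forallP h aD bJ ba.
by move: (forallP (h a) b); rewrite aD bJ ba.
Qed.
Lemma down_dn a : down (dn a).
Proof.
apply/andP; split; first by apply/subsetP => x; rewrite inE => /andP[].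
apply/forallP => x; apply/forallP => y; apply/implyP; rewrite !inE.
by case/and3P => /andP[_ xa] -> yx /=; apply: le_trans yx xa.
Qed.

Lemma dn_meet a b : dn (m a b) = dn a :&: dn b.
Proof. by apply/setP => k; rewrite !inE le_meetE andbACA andbb. Qed.
Lemma dn_bot : dn z = set0.
Proof.
apply/setP => k; rewrite !inE; apply/negP => /andP[kJ /le_botE e].
by move: kJ; rewrite /join_irr e eqxx.
Qed.
Lemma dn_top : dn o = J.
Proof. by apply/setP => k; rewrite !inE le_top andbT. Qed.
Lemma JA_nz k : k \in J -> k != z.
Proof. by rewrite inE => /andP[]. Qed.
Lemma dn_neg a : dn (n a) = neg (dn a).
Proof.
apply/setP => k; rewrite !inE; case kJ: (join_irr m z k) => //=.
apply/idP/idP => [/eqP e|dis].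
  have h := proj2 (pc a k) e.
  apply/disjP => k'; rewrite !inE => /andP[k'J k'a] /andP[_ k'k].
  have := le_meet k'k k'a; rewrite h => /le_botE e2.
  by move: k'J; rewrite /join_irr e2 eqxx.
have [h|h] := eqVneq (m k a) z; first by apply/eqP; apply/(proj1 (pc _ _)).
have [k' k'J k'le] := exJ h.
move: (le_trans k'le (le_ml _ _)) (le_trans k'le (le_mr _ _)) => k'k k'a.
move: k'J; rewrite inE => k'J.
by move/disjP: dis => /(_ k'); rewrite !inE k'J k'k k'a => /(_ isT isT).
Qed.

Fixpoint evalS (w : nat -> {set T}) (f : fm) : {set T} :=
  match f with
  | FVar x => w x
  | FAnd a b => evalS w a :&: evalS w b
  | FNeg a => neg (evalS w a)
  | F0 => set0
  | F1 => J
  | _ => set0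
  end.

Lemma hom (v : nat -> T) f : psl_lang f ->
  dn (@eval (@Alg T m n z o) v f) = evalS (fun x => dn (v x)) f.
Proof.
elim: f => //= [a IHa b IHb /andP[pa pb]|a IHa pa|_|_].
- by rewrite dn_meet IHa ?IHb.
- by rewrite dn_neg IHa.
- exact: dn_bot.
- exact: dn_top.
Qed.

Lemma evalS_down w : (forall x, down (w x)) -> forall f, down (evalS w f).
Proof.
move=> hw; elim=> /= [x|a IHa b IHb|a _ b _|a _ b _|a IHa| |];
  first [ exact: hw | exact: downJI | exact: downJ0 | exact: (downJN z le_trans) | exact: downJT ].
Qed.

Definition sub (D E : {set T}) : Prop := forall k, k \in D -> exists2 k', k' \in E & le k' k.
Lemma subset_sub (D E : {set T}) : D \subset E -> sub D E.
Proof. by move=> /subsetP h k kD; exists k; [apply: h | apply: le_refl]. Qed.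
Lemma negJ_anti (D E : {set T}) : D \subset E -> neg E \subset neg D.
Proof.
move=> /subsetP h; apply/subsetP => k; rewrite !inE => /andP[-> dis] /=.
by apply/disjP => x /h xE xk; move/disjP: dis => /(_ x xE xk).
Qed.
Lemma negJ_sub (D E : {set T}) : down E -> sub D E -> neg E \subset neg D.
Proof.
move=> dE h; apply/subsetP => k; rewrite !inE => /andP[-> dis] /=.
apply/disjP => x /h [k' k'E k'x]; rewrite inE => /andP[_ xk].
move/disjP: dis => /(_ k' k'E); apply; rewrite inE (downS dE k'E) /=.
exact: le_trans k'x xk.
Qed.

Section Mono.
Variables (w1 w2 : nat -> {set T}).
Hypotheses (d1 : forall x, down (w1 x)) (d2 : forall x, down (w2 x))
  (hsub : forall x, sub (w1 x) (w2 x)).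

Lemma mono f : psl_lang f ->
  (polar true f -> sub (evalS w1 f) (evalS w2 f)) /\
  (polar false f -> evalS w2 f \subset evalS w1 f).
Proof.
elim: f => [x _|a IHa b IHb /andP[pa pb]|a _ b _ //|a _ b _ //|a IHa pa|_|_] /=.
- by split=> // _; apply: hsub.
- have [IHa1 IHa2] := IHa pa; have [IHb1 IHb2] := IHb pb.
  split=> /andP[qa qb]; last exact: setISS (IHa2 qa) (IHb2 qb).
  move=> k; rewrite inE => /andP[ka kb].
  have [k1 k1E k1k] := IHa1 qa k ka.
  have k1J := downS (evalS_down d2 a) k1E.
  have k1b : k1 \in evalS w1 b := downP (evalS_down d1 b) kb k1J k1k.
  have [k2 k2E k2k] := IHb1 qb k1 k1b.
  have k2J := downS (evalS_down d2 b) k2E.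
  exists k2; last exact: le_trans k2k k1k.
  by rewrite inE k2E (downP (evalS_down d2 a) k1E k2J k2k).
- have [IHa1 IHa2] := IHa pa; split=> q.
    by apply: subset_sub; apply: negJ_anti; apply: IHa2.
  by apply: negJ_sub (IHa1 q); apply: evalS_down.
- by split=> // _ k; rewrite inE.
- by split=> // _; apply: subset_sub.
Qed.

Lemma posj j : (forall x, j \in w1 x -> j \in w2 x) ->
  forall f, psl_lang f -> polar true f -> j \in evalS w1 f -> j \in evalS w2 f.
Proof.
move=> hj; elim=> [x _ _|a IHa b IHb /andP[pa pb] /andP[qa qb]|a _ b _ //|a _ b _ //|a IHa pa qa|_ _|_ _] /=.
- exact: hj.
- by rewrite !inE => /andP[/IHa -> //] /IHb ->.
- by case: (@mono a pa) => _ h; exact: (subsetP (negJ_anti (h qa)) j).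

- by rewrite inE.
- by [].
Qed.

Lemma negcase f k : psl_lang f -> negative f -> k \in evalS w2 f -> k \in evalS w1 f.
Proof. by move=> pf ng; case: (mono pf) => _ h; exact: (subsetP (h ng) k). Qed.

Lemma antk j : (forall x k, k \in J -> le k j -> k \in w2 x -> k \in w1 x) ->
  forall f, psl_lang f -> sahl_ant f ->
  forall k, k \in J -> le k j -> k \in evalS w2 f -> k \in evalS w1 f.
Proof.
move=> hk; elim=> [x|a IHa b IHb|a IHa b IHb|a IHa b IHb|a IHa| |] pf /orP[ng|st] k kJ kj;
  try (exact: negcase); move: pf st => //=.
- by move=> _ _; apply: hk.
- move=> /andP[pa pb] /andP[sa sb]; rewrite !inE => /andP[ka kb].
  by rewrite (IHa pa sa k kJ kj ka) (IHb pb sb k kJ kj kb).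
Qed.

Lemma implj j : (forall x, j \in w1 x -> j \in w2 x) ->
  (forall x k, k \in J -> le k j -> k \in w2 x -> k \in w1 x) ->
  forall f, psl_lang f -> sahl_impl f -> j \in evalS w1 f -> j \in evalS w2 f.
Proof.
move=> hj hk f pf /orP[ps|]; first exact: posj.
case: f pf => //= a pa sa; rewrite !inE => /andP[-> dis] /=.
apply/disjP => k kA; rewrite inE => /andP[kJ kj].
by move/disjP: dis => /(_ k (antk hk pa sa kJ kj kA)); apply; rewrite inE kJ.
Qed.

Lemma bodyj j : (forall x, j \in w1 x -> j \in w2 x) ->
  (forall x k, k \in J -> le k j -> k \in w2 x -> k \in w1 x) ->
  forall f, psl_lang f -> sahl_body f -> j \in evalS w1 f -> j \in evalS w2 f.
Proof.
move=> hj hk; elim=> [x|a IHa b IHb|a IHa b IHb|a IHa b IHb|a IHa| |] pf /orP[si|st];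
  try (exact: implj); move: pf st => //=.
move=> /andP[pa pb] /andP[sa sb]; rewrite !inE => /andP[ja jb].
by rewrite (IHa pa sa ja) (IHb pb sb jb).
Qed.
End Mono.


Definition vj (V : nat -> {set T}) j x := BJ (enum [set k in V x | le k j]).

Lemma va (V : nat -> {set T}) j x k : k \in J -> le k j -> k \in V x -> k \in dn (vj V j x).
Proof.
move=> kJ kj kV; rewrite inE kJ /=; apply: BJ_ub.
by rewrite mem_enum inE kV kj.
Qed.

Lemma vc (V : nat -> {set T}) j x : j \in J -> j \in dn (vj V j x) -> j \in V x.
Proof.
move=> jJ; rewrite inE => /andP[_ jle]; apply/negPn/negP => jV.
have jirr : join_irr m z j by move: jJ; rewrite inE.
have ne := BJ_ne jirr (s := enum [set k in V x | le k j]).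
rewrite mem_enum inE (negbTE jV) /= in ne.
have le2 : le (vj V j x) j.
  by apply: BJ_lub => y; rewrite mem_enum inE => /andP[].
by move: (ne isT); rewrite -/(vj V j x) (le_anti le2 jle) eqxx.
Qed.

Lemma vd (V : nat -> {set T}) j x : down (V x) -> sub (dn (vj V j x)) (V x).
Proof.
move=> dV k; rewrite inE => /andP[kJ kle].
case: (boolP [exists k', (k' \in V x) && le k' k]) => [/existsP[k' /andP[h1 h2]]|nex].
  by exists k'.
exfalso.
have hs : forall s, s \in enum [set k in V x | le k j] -> le s (n k).
  move=> s; rewrite mem_enum inE => /andP[sV _].
  have [e|ne] := eqVneq (m s k) z; first by apply/eqP; apply/(proj1 (pc k s)).
  have [k'' k''J k''le] := exJ ne.
  have k''s := le_trans k''le (le_ml _ _); have k''k := le_trans k''le (le_mr _ _).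
  have k''V := downP dV sV k''J k''s.
  by move/negP: nex; case; apply/existsP; exists k''; rewrite k''V k''k.
have kn : le k (n k) := le_trans kle (BJ_lub hs).
have := proj2 (pc k k) (eqP kn); rewrite idem => e.
by move: kJ; rewrite inE /join_irr e eqxx.
Qed.

Lemma plus_eval (V : nat -> plus_alg HA) f :
  sval (eval V f) = evalS (fun x => sval (V x)) f.
Proof.
elim: f => //= [a IHa b IHb|a IHa]; first by rewrite IHa IHb.
by rewrite IHa.
Qed.


Lemma main_lemma (Q : sqe) :
  is_sahlqvist_qe Q -> qe_in_psl_lang Q ->
  validates (@Alg T m n z o) Q -> validates (plus_alg HA) Q.
Proof.
move=> /andP[yz hall] hpsl HAv V hV.
set yq := qe_y Q in yz hall hV *; set zq := qe_z Q in yz hall hV *.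
apply: val_inj => /=.
apply/setIidPl/subsetP => j jy.
pose W x := sval (V x).
have dW : forall x, down (W x) by move=> x; exact: (svalP (V x)).
have jJ : j \in J := downS (dW yq) jy.
pose v := vj W j.
case: (boolP (has (fun f => le j (@eval (@Alg T m n z o) v f)) (qe_ants Q))).
  move=> /hasIn [f [fin jf]].
  have /and3P[sb _ _] := allIn hall fin.
  have pf := allIn hpsl fin.
  have : j \in dn (@eval (@Alg T m n z o) v f) by rewrite inE jJ.
  rewrite hom // => jW1.
  have jW2 : j \in evalS W f.
    apply: (@bodyj (fun x => dn (v x)) W (fun x => down_dn _) dW
              (fun x => @vd W j x (dW x)) j _ _ f pf sb jW1).
      by move=> x; apply: vc.
    by move=> x k kJ kj kV; apply: va.
  move/(congr1 sval): (hV f fin); rewrite !plus_eval /= => e.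
  have : j \in evalS W f :&: W yq by rewrite inE jW2 jy.
  by rewrite -e inE => /andP[_].
move=> nhas; exfalso.
pose jl := BJ (enum [set b | le b j & b != j]).
pose v' x := if x == yq then j else if x == zq then jl else v x.
have v'y : v' yq = j by rewrite /v' eqxx.
have v'z : v' zq = jl by rewrite /v' eq_sym (negbTE yz) eqxx.
have jirr : join_irr m z j by move: jJ; rewrite inE.
have := HAv v'; rewrite /holds_le /= v'y v'z => h.
have jjl : le j jl.
  apply/eqP; apply: h => f fin.
  have /and3P[_ ny nz] := allIn hall fin.
  have -> : @eval (@Alg T m n z o) v' f = @eval (@Alg T m n z o) v f.
    apply: eval_ext => x ox; rewrite /v'.
    have -> : (x == yq) = false by apply/negP => /eqP ex; rewrite -ex ox in ny.
    have -> : (x == zq) = false by apply/negP => /eqP ex; rewrite -ex ox in nz.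
    by [].
  apply/eqP; apply: BJ_ub; rewrite mem_enum inE le_mr /=.
  apply/negP => /eqP e.
  move: (hasNIn nhas fin); rewrite /= /leA comm e eqxx //.
have jlj : le jl j by apply: BJ_lub => b; rewrite mem_enum inE => /andP[].
have := BJ_ne jirr (s := enum [set b | le b j & b != j]).
by rewrite mem_enum inE eqxx andbF -/jl (le_anti jlj jjl) eqxx => /(_ isT).
Qed.

End S.

Theorem proposition5p11 (T : finType) (m : T -> T -> T) (n : T -> T) (z o : T)
  (HA : is_PSL (@Alg T m n z o)) (Q : sqe) :
  is_sahlqvist_qe Q -> qe_in_psl_lang Q ->
  validates (@Alg T m n z o) Q -> validates (plus_alg HA) Q.
Proof. exact: main_lemma. Qed.
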